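(* Let $K$ be a compact line and let $G:K\to\mathbb{R}$ be a nondecreasing function. If $a=0_K$ or $a=1_K$, then either there exists a neighborhood $V$ of $a$ such that $V\setminus\{a\}\neq\emptyset$ and $G$ is constant on $V\setminus\{a\}$, or $a$ has a countable local basis.
   Context: A compact line is a compact space $K$ whose topology is the order topology of a linear order on $K$; $0_K$ and $1_K$ denote its minimum and maximum, and $0_K<1_K$. *)

(* Defs.v *)
From HB Require Import structures.
From mathcomp Require Import all_boot all_order all_algebra.
From mathcomp Require Import all_classical all_reals all_analysis.
Set Implicit Arguments. Unset Strict Implicit. Unset Printing Implicit Defensive.
Import Order.TTheory GRing.Theory Num.Theory.
Local Open Scope classical_set_scope.

Definition has_countable_local_basis (T : topologicalType) (x : T) : Prop :=
  exists B : set (set T),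
    countable B /\ (forall U, B U -> nbhs x U) /\
    (forall U, nbhs x U -> exists2 W, B W & W `<=` U).

(* Main.v *)
Require Import Defs.
From HB Require Import structures.
From mathcomp Require Import all_boot all_order all_algebra.
From mathcomp Require Import all_classical all_reals all_analysis.
Import Order.TTheory GRing.Theory Num.Theory.
Local Open Scope classical_set_scope.
Local Open Scope ring_scope.
Lemma key (T : topologicalType) (R : realType) (g : T -> R) (a : T)
  (B : T -> set T)
  (h1 : forall x, x <> a -> nbhs a (B x))
  (h2 : forall U, nbhs a U -> exists2 x, x <> a & B x `<=` U)
  (h3 : forall x z, B x z -> g z <= g x)
  (h4 : forall x y, x <> a -> y <> a -> g y < g x -> B y `<=` B x) :
  (exists V : set T, nbhs a V /\ V `\ a !=set0 /\
     exists c : R, forall x, (V `\ a) x -> g x = c)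
  \/ has_countable_local_basis a.
Proof.
have [x0 x0a _] := h2 _ filterT.
have [[x xa Bx]|nA] := pselect (exists2 x, x <> a & B x `<=` [set a]).
  right; exists [set B x]; split; first exact: countable1.
  split; first by move=> U ->; exact: h1.
  move=> U /[dup] nU /nbhs_singleton Ua; exists (B x) => //.
  by move=> z /Bx ->.
have nA' : forall x, x <> a -> exists z, B x z /\ z <> a.
  move=> x xa; apply: contrapT => hn; apply: nA; exists x => // z Bz.
  by apply: contrapT => za; apply: hn; exists z.
pose E := [set g x | x in [set x | x <> a]].
have lbE : lbound E (g a).
  move=> _ [x /= xa <-]; apply: h3; exact: nbhs_singleton (h1 _ xa).
have hiE : has_inf E by split; [exists (g x0), x0| exists (g a)].
have geE : forall x, x <> a -> inf E <= g x.
  move=> x xa; apply: ge_inf; first by exists (g a).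
  by exists x.
have [[y ya gy]|nAt] := pselect (exists2 y, y <> a & g y = inf E).
  left; exists (B y); split; first exact: h1.
  split; first by have [z [Bz za]] := nA' y ya; exists z.
  exists (inf E) => z [Bz za]; apply/eqP; rewrite eq_le geE // andbT.
  by rewrite -gy; apply: h3.
right.
have hy : forall n : nat, exists y, y <> a /\ g y < inf E + n.+1%:R^-1.
  move=> n; have [_ [y ya <-] lt] := @inf_adherent R E n.+1%:R^-1 ltac:(by rewrite invr_gt0) hiE.
  by exists y.
have [y hy'] := choice hy.
exists (range (B \o y)); split; first exact: card_image_le.
split; first by move=> _ [n _ <-]; apply: h1; case: (hy' n).
move=> U /h2 [x xa BxU].
have gtx : inf E < g x.
  by rewrite lt_neqAle geE // andbT; apply/eqP => ex; apply: nAt; exists x.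
have [k hk] := ltr_add_invr gtx.
exists (B (y k)); first by exists k.
apply: subset_trans BxU; apply: h4 => //; first by case: (hy' k).
by case: (hy' k) => _ /lt_trans; apply.
Qed.
Lemma side0 (d : Order.disp_t) (K : orderTopologicalType d) (z o : K)
  (hz : forall x : K, (z <= x)%O) (hlt : (z < o)%O) (U : set K) :
  nbhs z U -> exists2 x, x <> z & [set` Interval -oo%O (BLeft x)] `<=` U.
Proof.
rewrite itv_nbhsE => -[[l r] [oe zi] iU].
move: zi; rewrite itv_boundlr => /andP[lz zr].
case: r oe zr iU => [b t|b] oe zr iU.
- have bt := itv_open_ends_rside oe; subst b.
  exists t.
    by move=> tz; subst t; move: zr; rewrite bnd_simp ltxx.
  move=> y; rewrite /= in_itv /= => yt; apply: iU; rewrite /= itv_boundlr.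
  apply/andP; split; first by apply: le_trans lz _; rewrite bnd_simp.
  by rewrite bnd_simp.
- have bt := itv_open_ends_rinfty oe; subst b.
  exists o; first by move=> e; rewrite e ltxx in hlt.
  move=> y _; apply: iU; rewrite /= itv_boundlr.
  apply/andP; split; first by apply: le_trans lz _; rewrite bnd_simp.
  by [].
Qed.

Lemma side1 (d : Order.disp_t) (K : orderTopologicalType d) (z o : K)
  (ho : forall x : K, (x <= o)%O) (hlt : (z < o)%O) (U : set K) :
  nbhs o U -> exists2 x, x <> o & [set` Interval (BRight x) +oo%O] `<=` U.
Proof.
rewrite itv_nbhsE => -[[l r] [oe zi] iU].
move: zi; rewrite itv_boundlr => /andP[lz zr].
case: l oe lz iU => [b t|b] oe lz iU.
- have bt := itv_open_ends_lside oe; subst b.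
  exists t.
    by move=> tz; subst t; move: lz; rewrite bnd_simp ltxx.
  move=> y; rewrite /= in_itv /= andbT => yt; apply: iU; rewrite /= itv_boundlr.
  apply/andP; split; first by rewrite bnd_simp.
  by apply: le_trans zr; rewrite bnd_simp.
- have bt := itv_open_ends_linfty oe; subst b.
  exists z; first by move=> e; rewrite e ltxx in hlt.
  move=> y _; apply: iU; rewrite /= itv_boundlr.
  apply/andP; split; first by [].
  by apply: le_trans zr; rewrite bnd_simp.
Qed.

Theorem lemma5p1 (d : Order.disp_t) (K : orderTopologicalType d)
    (hK : compact [set: K]) (zeroK oneK : K)
    (hzero : forall x : K, (zeroK <= x)%O) (hone : forall x : K, (x <= oneK)%O)
    (hlt : (zeroK < oneK)%O)
    (R : realType) (G : K -> R) (hG : forall x y : K, (x <= y)%O -> G x <= G y)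
    (a : K) (ha : a = zeroK \/ a = oneK) :
  (exists V : set K, nbhs a V /\ V `\ a !=set0 /\
     exists c : R, forall x, (V `\ a) x -> G x = c)
  \/ has_countable_local_basis a.
Proof.
case: ha => ->.
- apply: (@key K R G zeroK (fun x => [set` Interval -oo%O (BLeft x)])).
  + move=> x xz; apply: open_nbhs_nbhs; split; first exact: lray_open.
    by rewrite /= in_itv /= lt_neqAle hzero andbT; apply/eqP => e; apply: xz.
  + exact: side0 hzero hlt.
  + by move=> x z; rewrite /= in_itv /= => /ltW /hG.
  + move=> x y _ _ gyx.
    have yx : (y < x)%O by rewrite ltNge; apply/negP => /hG; rewrite leNgt gyx.
    by move=> z; rewrite /= !in_itv /= => /lt_trans; apply.
- have := (@key K R (fun x => - G x) oneK (fun x => [set` Interval (BRight x) +oo%O])).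
  case.
  + move=> x xz; apply: open_nbhs_nbhs; split; first exact: rray_open.
    by rewrite /= in_itv /= andbT lt_neqAle hone andbT; apply/eqP => e; apply: xz.
  + exact: side1 hone hlt.
  + by move=> x z; rewrite /= in_itv /= andbT => /ltW /hG; rewrite lerN2.
  + move=> x y _ _; rewrite ltrN2 => gyx.
    have yx : (x < y)%O by rewrite ltNge; apply/negP => /hG; rewrite leNgt gyx.
    by move=> z; rewrite /= !in_itv /= !andbT; apply: lt_trans.
  + move=> [V [nV [ne [c hc]]]]; left; exists V; split => //; split => //.
    by exists (- c) => x /hc <-; rewrite opprK.
  + by right.
Qed.
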